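(* Let $F$ be a minimally unsatisfiable clause-set and $C\in F$. Let $C' := \{x\in C : \mathrm{ldeg}_F(x)=1\}$, and for $x\in C'$ let $F_x := \{D\in F : \overline{x}\in D\}$. Assume $|C'|\ge2$ and that for every $x\in C'$ the clause-set $\mathrm{DP}_{\mathrm{var}(x)}(F)$ is saturated minimally unsatisfiable. Then: 1. $|C'|=2$. 2. For all $x\in C'$ and all $D\in F_x$: $C\setminus C'\subseteq D$. 3. For $x,y\in C'$, the clause-sets $\mathrm{DP}_{\mathrm{var}(x)}(F)$ and $\mathrm{DP}_{\mathrm{var}(y)}(F)$ are isomorphic.
   Context: Literals are variables $v$ and complements $\overline{v}$; a clause is a finite set of literals with no complementary pair; a clause-set is a finite set of clauses; $\mathrm{var}(F)$ is the set of variables of $F$, $\mathrm{var}(x)$ the variable of literal $x$; $\mathrm{ldeg}_F(x)$ is the number of clauses of $F$ containing literal $x$. $\mathrm{DP}_v(F) := \{C \in F : v \notin \mathrm{var}(C)\} \cup \{(C \cup D)\setminus\{v,\overline{v}\} : C, D \in F,\ C \cap \overline{D} = \{v\}\}$. A minimally unsatisfiable $F$ is saturated if for every $C \in F$ and every literal $y$ with $\mathrm{var}(y) \in \mathrm{var}(F)\setminus \mathrm{var}(C)$, the clause-set $(F\setminus\{C\})\cup\{C\cup\{y\}\}$ is satisfiable. Clause-sets are isomorphic if a complement-preserving bijection on literals maps the clauses of one exactly onto the clauses of the other. *)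

(* Defs.v *)
From HB Require Import structures.
From mathcomp Require Import all_boot.
From mathcomp Require Import finmap.
Set Implicit Arguments. Unset Strict Implicit. Unset Printing Implicit Defensive.
Local Open Scope fset_scope.

(* Variables are natural numbers; a literal is (v, true) for v and
   (v, false) for its complement. *)
Definition lit := (nat * bool)%type.
Definition compl (x : lit) : lit := (x.1, ~~ x.2).
Definition lvar (x : lit) : nat := x.1.

Definition clause := {fset lit}.
Definition cls := {fset clause}.

Definition is_clause (C : clause) : Prop := forall x, x \in C -> compl x \notin C.
Definition is_clauseset (F : cls) : Prop := forall C, C \in F -> is_clause C.

Definition cvar (C : clause) : {fset nat} := [fset lvar x | x in C].
Definition fvar (F : cls) : {fset nat} := \bigcup_(C <- F) cvar C.

Definition ldeg (F : cls) (x : lit) : nat := #|` [fset D in F | x \in D]|.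

Definition sat_clause (f : nat -> bool) (C : clause) : bool :=
  [exists x : C, f (val x).1 == (val x).2].
Definition satisfiable (F : cls) : Prop :=
  exists f : nat -> bool, forall C, C \in F -> sat_clause f C.

Definition MU (F : cls) : Prop :=
  ~ satisfiable F /\ forall C, C \in F -> satisfiable (F `\ C).

Definition clash (C D : clause) : {fset lit} := [fset x in C | compl x \in D].

Definition DP (v : nat) (F : cls) : cls :=
  [fset C in F | v \notin cvar C] `|`
  [fset (C `|` D) `\` [fset (v, true); (v, false)]
     | C in F, D in F & clash C D == [fset (v, true)]].

Definition saturated_MU (F : cls) : Prop :=
  MU F /\
  forall C y, C \in F -> lvar y \in fvar F -> lvar y \notin cvar C ->
    satisfiable ((F `\ C) `|` [fset C `|` [fset y]]).

Definition isomorphic (F G : cls) : Prop :=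
  exists f : lit -> lit, bijective f /\ (forall x, f (compl x) = compl (f x)) /\
    [fset [fset f x | x in (C : clause)] | C : clause in F] = G.

(* Main.v *)
Require Import Defs.
From HB Require Import structures.
From mathcomp Require Import all_boot.
From mathcomp Require Import finmap.
From Stdlib Require Import Classical.
Set Implicit Arguments. Unset Strict Implicit. Unset Printing Implicit Defensive.
Local Open Scope fset_scope.

Lemma complK x : compl (compl x) = x.
Proof. by case: x => a []. Qed.
Lemma compl_neq x : compl x != x.
Proof. by case: x => a [] /=; rewrite /compl /= xpair_eqE eqxx. Qed.
Lemma lvar_compl x : lvar (compl x) = lvar x.
Proof. by []. Qed.
Lemma same_var x y : lvar x = lvar y -> y = x \/ y = compl x.
Proof. by case: x y => a s [b t] /= ->; case: s; case: t; auto. Qed.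
Lemma clause_var C x y : is_clause C -> x \in C -> y \in C -> lvar x = lvar y -> x = y.
Proof.
move=> hC xC yC /same_var [->//|e]; subst y.
by move: (hC x xC); rewrite yC.
Qed.
Lemma cvarP C v : reflect (exists2 l, l \in C & lvar l = v) (v \in cvar C).
Proof.
apply: (iffP idP) => [/imfsetP [l /= lC ->]|[l lC <-]]; first by exists l.
by apply/imfsetP; exists l.
Qed.
Lemma sat_clauseP f C : reflect (exists2 l, l \in C & f l.1 = l.2) (sat_clause f C).
Proof.
apply: (iffP existsP) => [[[l lC] /eqP /= h]|[l lC h]]; first by exists l.
by exists [`lC]; apply/eqP.
Qed.
Lemma fvarP G v : reflect (exists2 K, K \in G & v \in cvar K) (v \in fvar G).
Proof.
apply: (iffP idP) => [/bigfcupP [K /andP[KG _] h]|[K KG h]]; first by exists K.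
by apply/bigfcupP; exists K => //; rewrite KG.
Qed.
Lemma compl_val f l : f (compl l).1 = (compl l).2 <-> f l.1 <> l.2.
Proof. by case: l => a [] /=; case: (f a); split. Qed.

Definition flip (f : nat -> bool) v b := fun w => if w == v then b else f w.
Lemma flip_lit f v b (l : lit) : flip f v b l.1 = if l.1 == v then b else f l.1.
Proof. by []. Qed.

Lemma MU_assign F K : MU F -> K \in F ->
  exists f, (forall K', K' \in F -> K' != K -> sat_clause f K') /\ ~~ sat_clause f K.
Proof.
case=> nsat h KF; case: (h K KF) => f hf; exists f; split.
  by move=> K' K'F ne; apply: hf; rewrite in_fsetD1 ne.
apply/negP => sK; apply: nsat; exists f => K' K'F.
case: (eqVneq K' K) => [->//|ne]; apply: hf; by rewrite in_fsetD1 ne.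
Qed.

Lemma sat_assign G E y : saturated_MU G -> E \in G -> lvar y \in fvar G ->
  lvar y \notin cvar E ->
  exists f, [/\ (forall K, K \in G -> K != E -> sat_clause f K),
     ~~ sat_clause f E & f y.1 = y.2].
Proof.
case=> [[nsat _] hs] EG yG yE; case: (hs E y EG yG yE) => f hf.
have h1 : forall K, K \in G -> K != E -> sat_clause f K.
  by move=> K KG ne; apply: hf; rewrite in_fsetU in_fsetD1 ne KG.
have h2 : ~~ sat_clause f E.
  apply/negP => sE; apply: nsat; exists f => K KG.
  by case: (eqVneq K E) => [->//|ne]; apply: h1.
exists f; split => //.
have /sat_clauseP [l] := hf _ (fsetU1r _ _).
rewrite in_fsetU in_fset1 => /orP [lE h|/eqP -> //].
by move: h2; rewrite (_ : sat_clause f E) //; apply/sat_clauseP; exists l.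
Qed.

Lemma ldeg_uniq F x C D : ldeg F x = 1 -> C \in F -> x \in C -> D \in F -> x \in D -> D = C.
Proof.
rewrite /ldeg => /eqP /cardfs1P [a ha] CF xC DF xD.
have : C \in [fset D in F | x \in D] by rewrite !inE CF xC.
have : D \in [fset D in F | x \in D] by rewrite !inE DF xD.
by rewrite ha !in_fset1 => /eqP -> /eqP ->.
Qed.

Lemma DP_memP v F K : K \in DP v F <-> (K \in F /\ v \notin cvar K) \/
  exists A B, [/\ A \in F, B \in F, clash A B = [fset (v,true)] &
     K = (A `|` B) `\` [fset (v,true); (v,false)]].
Proof.
rewrite /DP in_fsetU; split.
  case/orP => [|/imfset2P [A AF [B /= BF ->]]].
    by rewrite !inE => /andP [h1 h2]; left.
  by right; exists A, B; move: BF AF => /= /andP [BF /eqP cl] AF.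
case => [[h1 h2]|[A [B [AF BF cl ->]]]]; apply/orP; first by left; rewrite !inE h1 h2.
right; apply/imfset2P; exists A => //.
by exists B => //; apply/andP; split => //; rewrite cl.
Qed.

Lemma clash_mem A B m : (m \in clash A B) = (m \in A) && (compl m \in B).
Proof. by rewrite /clash !inE. Qed.

Section Res.
Variables (F : cls) (C : clause) (x : lit).
Hypotheses (hF : is_clauseset F) (hC : C \in F) (hx : x \in C) (hdeg : ldeg F x = 1).

Lemma res_char K : K \in DP (lvar x) F <-> (K \in F /\ lvar x \notin cvar K) \/
  exists D, [/\ D \in F, compl x \in D, (forall m, m \in C -> compl m \in D -> m = x) &
     K = (C `|` D) `\` [fset x; compl x]].
Proof.
rewrite DP_memP; split; case=> [h|h]; [by left| |by left|].
- case: h => A [B [AF BF cl ->]]; right.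
  have: (lvar x, true) \in clash A B by rewrite cl in_fset1.
  rewrite clash_mem => /andP [tA fB].
  move: hx hdeg tA fB cl; case: x => v [] /= xC xdeg tA fB cl.
  + have eA := ldeg_uniq xdeg hC xC AF tA; subst A.
    exists B; split => //.
    by move=> m mC mB; apply/eqP; rewrite -in_fset1 -cl clash_mem mC.
  + have eB := ldeg_uniq xdeg hC xC BF fB; subst B.
    exists A; split => //.
    * move=> m mC mA; have: compl m \in clash A C by rewrite clash_mem mA complK.
      by rewrite cl in_fset1 => /eqP e; rewrite -[m]complK e.
    * apply/fsetP => m; rewrite !inE /=.
      by case: (m \in A); case: (m \in C); case: (m == (v,true)); case: (m == (v,false)).
- case: h => D [DF xD hD ->]; right.
  move: hx hdeg xD hD; case: x => v [] /= xC xdeg xD hD.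
  + exists C, D; split => //.
    apply/fsetP => m; rewrite clash_mem in_fset1; apply/idP/idP.
    * by case/andP => mC mD; rewrite (hD m mC mD).
    * by move/eqP ->; rewrite /= xC xD.
  + exists D, C; split => //.
    * apply/fsetP => m; rewrite clash_mem in_fset1; apply/idP/idP.
      - case/andP => mD mC; have := hD _ mC; rewrite complK => /(_ mD) e.
        by rewrite -[m]complK e.
      - by move/eqP ->; rewrite /= xD xC.
    * apply/fsetP => m; rewrite !inE /=.
      by case: (m \in D); case: (m \in C); case: (m == (v,true)); case: (m == (v,false)).
Qed.

Lemma xinC : lvar x \in cvar C.
Proof. by apply/cvarP; exists x. Qed.

Lemma res_contains K : K \in DP (lvar x) F ->
  (K \in F /\ lvar x \notin cvar K) \/ (forall m, m \in C -> m != x -> m \in K).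
Proof.
case/res_char => [h|[D [DF xD hD ->]]]; [by left|right].
move=> m mC mx; rewrite in_fsetD !in_fsetU !in_fset1 mC /= andbT negb_or mx /=.
apply/negP => /eqP e; rewrite e in mC; by move: (hF hC hx); rewrite mC.
Qed.

Lemma case1_nolit K y : K \in F -> lvar x \notin cvar K -> y \in C ->
  ldeg F y = 1 -> y \in K -> False.
Proof.
move=> KF Kx yC ydeg yK; have e := ldeg_uniq ydeg hC yC KF yK; subst K.
by move: Kx; rewrite xinC.
Qed.

Lemma lit_in_DP K y : y \in C -> ldeg F y = 1 -> K \in DP (lvar x) F -> y \in K ->
  forall m, m \in C -> m != x -> m \in K.
Proof.
move=> yC ydeg /res_contains [[KF Kx]|//] yK.
by case: (case1_nolit KF Kx yC ydeg yK).
Qed.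

Lemma compl_res K m : K \in DP (lvar x) F -> m \in C -> m != x -> compl m \in K ->
  K \in F /\ lvar x \notin cvar K.
Proof.
case/res_char => [//|[D [DF xD hD ->]]] mC mx.
move=> /fsetDP [/fsetUP [h|h] _].
- by move: (hF hC mC); rewrite h.
- by move: mx; rewrite (hD m mC h) eqxx.
Qed.

Lemma exists_res : ~ satisfiable (DP (lvar x) F) -> MU F ->
  exists2 K, K \in DP (lvar x) F & forall m, m \in C -> m != x -> m \in K.
Proof.
move=> ns hMU; apply: NNPP => hn; apply: ns.
case: (MU_assign hMU hC) => f [hf _]; exists f => K KG.
case: (res_contains KG) => [[KF Kx]|hall]; last by exfalso; apply: hn; exists K.
apply: hf => //; apply/negP => /eqP e; subst K; by move: Kx; rewrite xinC.
Qed.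
End Res.

Lemma lit_or f (l : lit) : f l.1 = l.2 \/ f (compl l).1 = (compl l).2.
Proof. by case: l => a [] /=; case: (f a); auto. Qed.
Lemma lit_excl f (l : lit) : f l.1 = l.2 -> f (compl l).1 = (compl l).2 -> False.
Proof. by case: l => a [] /= ->. Qed.

Lemma unsat_lit f K l : ~~ sat_clause f K -> l \in K -> f l.1 <> l.2.
Proof. by move=> /negP h lK e; apply: h; apply/sat_clauseP; exists l. Qed.

Lemma neg_true f K l : ~~ sat_clause f K -> compl l \in K -> f l.1 = l.2.
Proof. by move=> h lK; case: (lit_or f l) => // e; case: (unsat_lit h lK e). Qed.

Lemma diff_var C a b : is_clause C -> a \in C -> b \in C -> a != b -> lvar a != lvar b.
Proof. move=> hC aC bC ab; apply/eqP => e; move/eqP: ab; apply; exact: clause_var hC aC bC e. Qed.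

Lemma ex_mem (A : {fset lit}) : (0 < #|` A|)%N -> exists a, a \in A.
Proof. by rewrite cardfs_gt0 => /fset0Pn. Qed.

Section Main.
Variables (F : cls) (C : clause).
Hypotheses (hF : is_clauseset F) (hMU : MU F) (hC : C \in F).
Let C' := [fset x in C | ldeg F x == 1%N].
Hypothesis hsat : forall x, x \in C' -> saturated_MU (DP (lvar x) F).

Lemma Cp_mem x : x \in C' -> x \in C /\ ldeg F x = 1.
Proof. by rewrite /C' !inE => /andP [? /eqP]. Qed.

Lemma no_three x y z : x \in C' -> y \in C' -> z \in C' ->
  x != y -> x != z -> y != z -> False.
Proof.
move=> xCp /Cp_mem [yC yd] /Cp_mem [zC zd] xy xz yz.
have hS := hsat xCp; have [xC xd] := Cp_mem xCp.
have hCl := hF hC.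
have zx' : z != x by rewrite eq_sym.
set G := DP (lvar x) F in hS.
have muG : MU G := hS.1.
have nsG := muG.1.
have [K0 K0G K0h] := exists_res hF hC xC xd nsG hMU.
have yK0 : y \in K0 by apply: K0h; rewrite // eq_sym.
have zK0 : z \in K0 by apply: K0h; rewrite // eq_sym.
have vyz := diff_var hCl yC zC yz.
case: (classic (exists2 E, E \in G & compl z \in E)) => [[E EG zE]|hnE].
- have [f [h1 h2 h3]] : exists f, [/\ forall K, K \in G -> K != E -> sat_clause f K,
      ~~ sat_clause f E & f y.1 = y.2].
    case: (boolP (lvar y \in cvar E)) => hy.
    + case/cvarP: hy => l lE /esym /same_var [e|e]; subst l.
      * have [EF Ex] := compl_res hF hC xC xd EG zC zx' zE.
        by case: (case1_nolit hC xC EF Ex yC yd lE).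
      * have [f [hf1 hf2]] := MU_assign muG EG.
        by exists f; split => //; apply: neg_true hf2 lE.
    + apply: sat_assign hS EG _ hy.
      by apply/fvarP; exists K0 => //; apply/cvarP; exists y.
  have fz := neg_true h2 zE.
  apply: nsG; exists (flip f z.1 (~~ z.2)) => K KG.
  case: (eqVneq K E) => [->|ne].
    apply/sat_clauseP; exists (compl z) => //; by rewrite flip_lit /= eqxx.
  have /sat_clauseP [l lK hl] := h1 K KG ne.
  case: (eqVneq l.1 z.1) => e.
  + have [el|el] := same_var (esym e); subst l.
    * have yK : y \in K by apply: (lit_in_DP hF hC xC xd zC zd KG lK); rewrite // eq_sym.
      apply/sat_clauseP; exists y => //; by rewrite flip_lit (negbTE vyz).
    * by case: (lit_excl fz hl).
  + by apply/sat_clauseP; exists l => //; rewrite flip_lit (negbTE e).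
- have [f [h1 h2]] := MU_assign muG K0G.
  apply: nsG; exists (flip f z.1 z.2) => K KG.
  case: (eqVneq K K0) => [->|ne].
    apply/sat_clauseP; exists z => //; by rewrite flip_lit eqxx.
  have /sat_clauseP [l lK hl] := h1 K KG ne.
  case: (eqVneq l.1 z.1) => e.
  + have [el|el] := same_var (esym e); subst l.
    * by apply/sat_clauseP; exists z => //; rewrite flip_lit eqxx.
    * by case: hnE; exists K.
  + by apply/sat_clauseP; exists l => //; rewrite flip_lit (negbTE e).
Qed.

Lemma card_le2 : (#|` C'| <= 2)%N.
Proof.
rewrite leqNgt; apply/negP => h3.
have [x xC] := ex_mem (leq_trans (isT : 0 < 3)%N h3).
have h2 : (1 < #|` C' `\ x|)%N by move: h3; rewrite (cardfsD1 x) xC.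
have [y] := ex_mem (ltnW h2); rewrite in_fsetD1 => /andP [yx yC].
have h1 : (0 < #|` (C' `\ x) `\ y|)%N.
  by move: h2; rewrite (cardfsD1 y) in_fsetD1 yx yC.
have [z] := ex_mem h1; rewrite !in_fsetD1 => /andP [zy /andP [zx zC]].
by apply: (no_three xC yC zC); rewrite // eq_sym.
Qed.
End Main.

Definition sw (x y l : lit) : lit :=
  if l == x then compl y else if l == compl x then y
  else if l == y then compl x else if l == compl y then x else l.

Lemma compl_inj : injective compl.
Proof. by move=> a b e; rewrite -[a]complK e complK. Qed.

Section Sw.
Variables (x y : lit).
Hypothesis vxy : lvar x != lvar y.

Lemma var_neq a b : lvar a != lvar b -> a != b.
Proof. by apply: contra => /eqP ->. Qed.

Lemma ne1 : x != y. Proof. exact: var_neq vxy. Qed.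
Lemma ne2 : x != compl y. Proof. exact: (@var_neq x (compl y) vxy). Qed.
Lemma ne3 : compl x != y. Proof. exact: (@var_neq (compl x) y vxy). Qed.
Lemma ne4 : compl x != compl y. Proof. exact: (@var_neq (compl x) (compl y) vxy). Qed.
Lemma ne5 : y != compl x. Proof. by rewrite eq_sym ne3. Qed.
Lemma ne6 : compl y != x. Proof. by rewrite eq_sym ne2. Qed.
Lemma ne7 : compl x != x. Proof. exact: compl_neq. Qed.
Lemma ne8 : compl y != y. Proof. exact: compl_neq. Qed.
Lemma ne9 : y != x. Proof. by rewrite eq_sym ne1. Qed.
Lemma ne10 : compl y != compl x. Proof. by rewrite eq_sym ne4. Qed.

Lemma sw_x : sw x y x = compl y. Proof. by rewrite /sw eqxx. Qed.
Lemma sw_nx : sw x y (compl x) = y. Proof. by rewrite /sw (negbTE ne7) eqxx. Qed.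
Lemma sw_y : sw x y y = compl x.
Proof. by rewrite /sw (negbTE ne9) (negbTE ne5) eqxx. Qed.
Lemma sw_ny : sw x y (compl y) = x.
Proof. by rewrite /sw (negbTE ne6) (negbTE ne10) (negbTE ne8) eqxx. Qed.

Lemma sw_cases l :
  l = x \/ l = compl x \/ l = y \/ l = compl y \/
      [/\ l != x, l != compl x, l != y, l != compl y & sw x y l = l].
Proof.
case: (eqVneq l x) => [->|a]; first by left.
case: (eqVneq l (compl x)) => [->|b]; first by right; left.
case: (eqVneq l y) => [->|c]; first by right; right; left.
case: (eqVneq l (compl y)) => [->|d]; first by right; right; right; left.
by right; right; right; right; split => //; rewrite /sw (negbTE a) (negbTE b) (negbTE c) (negbTE d).
Qed.

Lemma sw_invol l : sw x y (sw x y l) = l.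
Proof.
case: (sw_cases l) => [->|[->|[->|[->|[_ _ _ _ e]]]]]; last by rewrite !e.
- by rewrite sw_x sw_ny.
- by rewrite sw_nx sw_y.
- by rewrite sw_y sw_nx.
- by rewrite sw_ny sw_x.
Qed.

Lemma sw_compl l : sw x y (compl l) = compl (sw x y l).
Proof.
case: (sw_cases l) => [->|[->|[->|[->|[a b c d ->]]]]].
- by rewrite sw_x sw_nx complK.
- by rewrite complK sw_x sw_nx.
- by rewrite sw_y sw_ny complK.
- by rewrite complK sw_ny sw_y.
- rewrite /sw.
  have -> : (compl l == x) = false by apply/negbTE; apply: contra b => /eqP <-; rewrite complK.
  have -> : (compl l == compl x) = false by apply/negbTE; apply: contra a => /eqP /compl_inj ->.
  have -> : (compl l == y) = false by apply/negbTE; apply: contra d => /eqP <-; rewrite complK.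
  have -> : (compl l == compl y) = false by apply/negbTE; apply: contra c => /eqP /compl_inj ->.
  by [].
Qed.

Lemma mem_sw (K : clause) m : (m \in [fset sw x y l | l in K]) = (sw x y m \in K).
Proof.
apply/imfsetP/idP => [[l lK ->]|h]; first by rewrite sw_invol.
by exists (sw x y m); rewrite // sw_invol.
Qed.
End Sw.

Lemma sw_sym x y l : lvar x != lvar y -> sw x y l = sw y x l.
Proof.
move=> v; have v' : lvar y != lvar x by rewrite eq_sym.
case: (sw_cases x y l) => [->|[->|[->|[->|[a b c d ->]]]]].
- by rewrite sw_x (sw_y v').
- by rewrite sw_nx (sw_ny v').
- by rewrite (sw_y v) sw_x.
- by rewrite (sw_ny v) sw_nx.
- by rewrite /sw (negbTE a) (negbTE b) (negbTE c) (negbTE d).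
Qed.

Section Main2.
Variables (F : cls) (C : clause).
Hypotheses (hF : is_clauseset F) (hMU : MU F) (hC : C \in F).
Let C' := [fset x in C | ldeg F x == 1%N].
Hypothesis hsat : forall x, x \in C' -> saturated_MU (DP (lvar x) F).
Hypothesis h2 : (2 <= #|` C'|)%N.

Lemma other x : x \in C' -> exists2 y, y \in C' & y != x.
Proof.
move=> xC; have : (0 < #|` C' `\ x|)%N by move: h2; rewrite (cardfsD1 x) xC.
by case/ex_mem => y; rewrite in_fsetD1 => /andP [yx yC]; exists y.
Qed.

Lemma two x y w : x \in C' -> y \in C' -> x != y -> w \in C' -> w = x \/ w = y.
Proof.
move=> xC yC xy wC; case: (eqVneq w x) => [->|wx]; first by left.
case: (eqVneq w y) => [->|wy]; first by right.
have xw : x != w by rewrite eq_sym.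
have yw : y != w by rewrite eq_sym.
by case: (no_three hF hMU hC hsat xC yC wC xy xw yw).
Qed.

Lemma disj x y D : x \in C' -> y \in C' -> x != y -> D \in F -> compl x \in D ->
  compl y \notin D.
Proof.
move=> xCp yCp xy DF xD; apply/negP => yD.
have [xC xd] := Cp_mem xCp; have [yC yd] := Cp_mem yCp.
have nsG := (hsat yCp).1.1.
have [f [hf1 hf2]] := MU_assign hMU DF.
have fx := neg_true hf2 xD.
apply: nsG; exists f => K KG.
case: (res_contains hF hC yC yd KG) => [[KF Ky]|hall].
- apply: hf1 => //; apply/negP => /eqP e; subst K.
  by move: Ky; rewrite (_ : lvar y \in cvar D) //; apply/cvarP; exists (compl y).
- by apply/sat_clauseP; exists x => //; apply: hall xC xy.
Qed.

Lemma claim2 x D l : x \in C' -> D \in F -> compl x \in D -> l \in C -> l \notin C' ->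
  l \in D.
Proof.
move=> xCp DF xD lC lC'.
have [y yCp yx] := other xCp.
have [xC xd] := Cp_mem xCp; have [yC yd] := Cp_mem yCp.
have hCl := hF hC.
have xy : x != y by rewrite eq_sym.
have lx : l != x by apply: contraNneq lC' => ->.
have ly : l != y by apply: contraNneq lC' => ->.
have vlx := diff_var hCl lC xC lx.
have vly := diff_var hCl lC yC ly.
have vyx := diff_var hCl yC xC yx.
have nyD := disj xCp yCp xy DF xD.
case: (boolP (l \in D)) => // lD; exfalso.
have hS := hsat yCp.
set G := DP (lvar y) F in hS.
have muG : MU G := hS.1.
have yD : y \notin D.
  apply/negP => yD; have e := ldeg_uniq yd hC yC DF yD; subst D.
  by move: (hCl x xC); rewrite xD.
have DG : D \in G.
  apply/DP_memP; left; split => //; apply/negP => /cvarP [m mD /esym/same_var [e|e]]; subst m.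
  - by rewrite mD in yD.
  - by rewrite mD in nyD.
have [f [h1 h2' h3]] : exists f, [/\ forall K, K \in G -> K != D -> sat_clause f K,
      ~~ sat_clause f D & f l.1 = l.2].
  case: (boolP (lvar l \in cvar D)) => hl.
  - case/cvarP: hl => m mD /esym/same_var [e|e]; subst m; first by rewrite mD in lD.
    have [f [hf1 hf2]] := MU_assign muG DG.
    by exists f; split => //; apply: neg_true hf2 mD.
  - apply: sat_assign hS DG _ hl.
    have [K0 K0G K0h] := exists_res hF hC yC yd muG.1 hMU.
    by apply/fvarP; exists K0 => //; apply/cvarP; exists l => //; apply: K0h.
have fx := neg_true h2' xD.
apply: hMU.1; exists (flip (flip f y.1 (~~ y.2)) x.1 (~~ x.2)) => K KF.
case: (eqVneq K C) => [->|KC].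
  by apply/sat_clauseP; exists l => //; rewrite !flip_lit (negbTE vlx) (negbTE vly).
case: (boolP (compl y \in K)) => yK.
  apply/sat_clauseP; exists (compl y) => //.
  by rewrite !flip_lit /= (negbTE vyx) eqxx.
case: (eqVneq K D) => [->|KD].
  by apply/sat_clauseP; exists (compl x) => //; rewrite !flip_lit /= eqxx.
have KG : K \in G.
  apply/DP_memP; left; split => //; apply/negP => /cvarP [m mK /esym/same_var [e|e]]; subst m.
  - by move: KC; rewrite (ldeg_uniq yd hC yC KF mK) eqxx.
  - by rewrite mK in yK.
have /sat_clauseP [m mK hm] := h1 K KG KD.
case: (eqVneq m.1 x.1) => ex.
  have [e|e] := same_var (esym ex); subst m.
  - by move: KC; rewrite (ldeg_uniq xd hC xC KF mK) eqxx.
  - by apply/sat_clauseP; exists (compl x) => //; rewrite !flip_lit /= eqxx.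
case: (eqVneq m.1 y.1) => ey.
  have [e|e] := same_var (esym ey); subst m.
  - by move: KC; rewrite (ldeg_uniq yd hC yC KF mK) eqxx.
  - by rewrite mK in yK.
by apply/sat_clauseP; exists m => //; rewrite !flip_lit (negbTE ex) (negbTE ey).
Qed.


Lemma img x y K : x \in C' -> y \in C' -> x != y -> K \in DP (lvar x) F ->
  [fset sw x y l | l in K] \in DP (lvar y) F.
Proof.
move=> xCp yCp xy KG.
have [xC xd] := Cp_mem xCp; have [yC yd] := Cp_mem yCp.
have hCl := hF hC.
have vxy := diff_var hCl xC yC xy.
have inCp : forall m, m \in C -> m != x -> m != y -> m \notin C'.
  move=> m mC mx my; apply/negP => mCp.
  by case: (two xCp yCp xy mCp) => e; [move: mx|move: my]; rewrite e eqxx.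
case/(res_char hC xC xd): KG => [[KF Kx]|[D [DF xD hD ->]]].
- have nx : x \notin K by apply: contra Kx => xK; apply/cvarP; exists x.
  have nnx : compl x \notin K by apply: contra Kx => xK; apply/cvarP; exists (compl x).
  have ny : y \notin K by apply/negP => yK; apply: (case1_nolit hC xC KF Kx yC yd yK).
  have hK := hF KF.
  case: (boolP (compl y \in K)) => yK.
  + apply/(res_char hC yC yd); right; exists K; split => //.
    * move=> m mC mK; case: (eqVneq m x) => [e|mx]; first by subst m; rewrite mK in nnx.
      case: (eqVneq m y) => [//|my].
      have mK' := claim2 yCp KF yK mC (inCp m mC mx my).
      by move: (hK m mK'); rewrite mK.
    * apply/fsetP => m; rewrite (mem_sw vxy) in_fsetD !in_fsetU !in_fset1.
      case: (sw_cases x y m) => [->|[->|[->|[->|[a b c d ->]]]]].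
      - by rewrite sw_x yK xC (negbTE xy) (negbTE (ne2 vxy)).
      - by rewrite sw_nx (negbTE ny) (negbTE (ne3 vxy)) (negbTE (ne4 vxy)) (negbTE (hCl x xC)) (negbTE nnx).
      - by rewrite (sw_y vxy) (negbTE nnx) eqxx.
      - by rewrite (sw_ny vxy) (negbTE nx) eqxx orbT.
      - rewrite (negbTE c) (negbTE d) /=.
        case: (boolP (m \in C)) => //= mC.
        by rewrite (claim2 yCp KF yK mC (inCp m mC a c)).
  + have -> : [fset sw x y l | l in K] = K.
      apply/fsetP => m; rewrite (mem_sw vxy).
      case: (sw_cases x y m) => [->|[->|[->|[->|[a b c d ->]]]]] //.
      - by rewrite sw_x (negbTE yK) (negbTE nx).
      - by rewrite sw_nx (negbTE ny) (negbTE nnx).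
      - by rewrite (sw_y vxy) (negbTE nnx) (negbTE ny).
      - by rewrite (sw_ny vxy) (negbTE nx) (negbTE yK).
    apply/DP_memP; left; split => //.
    by apply/negP => /cvarP [m mK /esym/same_var [e|e]]; subst m; [rewrite mK in ny|rewrite mK in yK].
- have yD : y \notin D.
    apply/negP => yD; have e := ldeg_uniq yd hC yC DF yD; subst D.
    by move: (hCl x xC); rewrite xD.
  have xD' : x \notin D.
    apply/negP => xD'; have e := ldeg_uniq xd hC xC DF xD'; subst D.
    by move: (hCl x xC); rewrite xD.
  have nyD := disj xCp yCp xy DF xD.
  have -> : [fset sw x y l | l in (C `|` D) `\` [fset x; compl x]] = D.
    apply/fsetP => m; rewrite (mem_sw vxy) in_fsetD !in_fsetU !in_fset1.
    case: (sw_cases x y m) => [->|[->|[->|[->|[a b c d ->]]]]].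
    - by rewrite sw_x (negbTE (hCl y yC)) (negbTE nyD) (negbTE xD') andbF.
    - by rewrite sw_nx yC xD (negbTE (ne9 vxy)) (negbTE (ne5 vxy)).
    - by rewrite (sw_y vxy) (negbTE yD) eqxx orbT.
    - by rewrite (sw_ny vxy) (negbTE nyD) eqxx.
    - rewrite (negbTE a) (negbTE b) /=.
      case: (boolP (m \in C)) => //= mC.
      by rewrite (claim2 xCp DF xD mC (inCp m mC a c)).
  apply/DP_memP; left; split => //.
  by apply/negP => /cvarP [m mK /esym/same_var [e|e]]; subst m; [rewrite mK in yD|rewrite mK in nyD].
Qed.

End Main2.

Theorem lemma68 (F : cls) (C : clause) :
  is_clauseset F -> MU F -> C \in F ->
  let C' := [fset x in C | ldeg F x == 1%N] in
  (2 <= #|` C'|)%N ->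
  (forall x, x \in C' -> saturated_MU (DP (lvar x) F)) ->
  [/\ #|` C'| = 2%N,
      (forall x D, x \in C' -> D \in F -> compl x \in D -> C `\` C' `<=` D) &
      (forall x y, x \in C' -> y \in C' ->
         isomorphic (DP (lvar x) F) (DP (lvar y) F))].
Proof.
move=> hF hMU hC C' h2 hsat.
split.
- apply/eqP; rewrite eqn_leq h2 andbT; exact: card_le2 hF hMU hC hsat.
- move=> x D xCp DF xD; apply/fsubsetP => l; rewrite in_fsetD => /andP [lC' lC].
  by have := claim2 hF hMU hC hsat h2 xCp DF xD lC lC'.
- move=> x y xCp yCp; case: (eqVneq x y) => [<-|xy].
  + exists id; split; first by exists id.
    split => //.
    apply/fsetP => K; apply/imfsetP/idP => [[K' K'G ->]|KG]; first by rewrite imfset_id.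
    by exists K; rewrite // imfset_id.
  + have [xC _] := Cp_mem xCp; have [yC _] := Cp_mem yCp.
    have vxy := diff_var (hF C hC) xC yC xy.
    have yx : y != x by rewrite eq_sym.
    have vyx : lvar y != lvar x by rewrite eq_sym.
    exists (sw x y); split; last split.
    * by exists (sw x y) => l; apply: sw_invol.
    * by move=> l; apply: sw_compl.
    * apply/fsetP => K'; apply/imfsetP/idP => [[K KG ->]|K'G].
      - by have := img hF hMU hC hsat h2 xCp yCp xy KG.
      - exists [fset sw x y l | l in K'].
        + have := img hF hMU hC hsat h2 yCp xCp yx K'G.
          rewrite (_ : [fset sw y x l | l in K'] = [fset sw x y l | l in K']) //.
          by apply/fsetP => m; rewrite (mem_sw vyx) (mem_sw vxy) (sw_sym _ vxy).
        + by apply/fsetP => m; rewrite !(mem_sw vxy) sw_invol.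
Qed.
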